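(* Let $(p_t)_{t\ge0}$ be the laws of the Ornstein--Uhlenbeck process $dX_t=-X_t\,dt+\sqrt2\,dB_t$ started from a norm-subgaussian random vector $X_0=X\sim p$ in $\mathbb{R}^d$. Fix $0<\delta<1$ and take $T_1\ge\log\big(\frac{16}{\delta}d(\|X\|_{\psi_2}+1)\big)$. Then for all $x\in\mathbb{R}^d$ and $i\in\{1,\dots,d\}$, $$\big|-x_i-\partial_i\log p_{T_1}(x)\big|\le\frac{\delta}{2d}(1+\|x\|).$$
   Context: $\|X\|_{\psi_2}:=\inf\{t>0:\mathbb{E}[e^{\|X\|^2/t^2}]\le2\}$; $X$ is norm-subgaussian if this is finite. $p_{T_1}$ denotes the Lebesgue density of the law of $X_{T_1}$. *)

(* Defs.v *)
From HB Require Import structures.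
From mathcomp Require Import all_boot all_order all_algebra.
From mathcomp Require Import all_classical all_reals all_analysis.
Set Implicit Arguments. Unset Strict Implicit. Unset Printing Implicit Defensive.
Import Order.TTheory GRing.Theory Num.Theory.
Import numFieldNormedType.Exports.
Local Open Scope classical_set_scope.
Local Open Scope ring_scope.

Section Defs.
Context {R : realType}.

Definition enorm {n : nat} (x : 'rV[R]_n) : R :=
  Num.sqrt (\sum_(j < n) x ord0 j ^+ 2).

Definition basis_vec {n : nat} (i : 'I_n) : 'rV[R]_n := \row_(j < n) (i == j)%:R.

Context {dT : measure_display} {T : measurableType dT} (P : probability T R).

Definition rvec {n : nat} (X : 'I_n -> {RV P >-> R}) (w : T) : 'rV[R]_n :=
  \row_(j < n) X j w.

Definition psi2_set {n : nat} (X : 'I_n -> {RV P >-> R}) : set R :=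
  [set t : R | 0 < t /\
     (\int[P]_w (expR (enorm (rvec X w) ^+ 2 / t ^+ 2))%:E <= 2%:E)%E].

(* X is norm-subgaussian iff the psi_2 norm is finite, i.e. the set is nonempty. *)
Definition norm_subgaussian {n : nat} (X : 'I_n -> {RV P >-> R}) : Prop :=
  psi2_set X !=set0.

Definition psi2_norm {n : nat} (X : 'I_n -> {RV P >-> R}) : R :=
  inf (psi2_set X).

Definition gauss_density {n : nat} (s2 : R) (z : 'rV[R]_n) : R :=
  (2 * pi * s2) `^ (- (n%:R / 2)) * expR (- (enorm z ^+ 2) / (2 * s2)).

(* Lebesgue density p_t of the law of X_t, where X_t solves the OU SDE
   dX_t = -X_t dt + sqrt 2 dB_t with X_0 = X.  Explicitly,
   X_t = e^{-t} X_0 + sqrt(1 - e^{-2t}) Z with Z ~ N(0, I) independent of X_0,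
   so p_t(x) = E[ phi_{1 - e^{-2t}}(x - e^{-t} X_0) ]. *)
Definition OU_density {n : nat} (X : 'I_n -> {RV P >-> R}) (t : R)
    (x : 'rV[R]_n) : R :=
  fine (\int[P]_w
          (gauss_density (1 - expR (- (2 * t))) (x - expR (- t) *: rvec X w))%:E).

End Defs.

(* Main.v *)
Require Import Defs.
From HB Require Import structures.
From mathcomp Require Import all_boot all_order all_algebra.
From mathcomp Require Import all_classical all_reals all_analysis.
From mathcomp Require Import measurable_realfun.
From mathcomp Require Import ring lra.
Set Implicit Arguments. Unset Strict Implicit. Unset Printing Implicit Defensive.
Import Order.TTheory GRing.Theory Num.Theory.
Import numFieldNormedType.Exports.
Local Open Scope classical_set_scope.
Local Open Scope ring_scope.

Section core.
Context {R : realType} {dT : measure_display} {T : measurableType dT} (P : probability T R).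

Lemma int_dom (f g : T -> R) : measurable_fun setT f ->
  P.-integrable setT (EFin \o g) -> (forall w, `|f w| <= g w) ->
  P.-integrable setT (EFin \o f).
Proof.
move=> mf ig fg; apply: (le_integrable _ _ _ ig) => //.
  exact/measurable_EFinP.
move=> w _ /=; by rewrite !lee_fin (le_trans (fg w))// ler_norm.
Qed.

Lemma int_cst (k : R) : P.-integrable setT (EFin \o cst k).
Proof. exact: finite_measure_integrable_cst. Qed.

Lemma Rint_cst (k : R) : \int[P]_w k = k.
Proof. rewrite Rintegral_cst// -[RHS]mulr1; congr (_ * _); rewrite -[1]/(fine 1%E); congr fine; exact: probability_setT. Qed.

Lemma int_bound (E : T -> R) (b : R) : measurable_fun setT E ->
  (forall w, 0 <= E w) -> (\int[P]_w (E w)%:E <= b%:E)%E ->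
  P.-integrable setT (EFin \o E) /\ \int[P]_w E w <= b.
Proof.
move=> mE E0 Eb.
have fin : (\int[P]_w (E w)%:E)%E \is a fin_num.
  rewrite ge0_fin_numE; first by rewrite (le_lt_trans Eb)// ltry.
  by apply: integral_ge0 => w _; rewrite lee_fin.
split.
  apply/integrableP; split; first exact/measurable_EFinP.
  under eq_integral do rewrite /= ger0_norm//.
  by rewrite (le_lt_trans Eb)// ltry.
by rewrite /Rintegral -lee_fin fineK.
Qed.


Lemma int_add (f g : T -> R) : P.-integrable setT (EFin \o f) ->
  P.-integrable setT (EFin \o g) -> P.-integrable setT (EFin \o (fun w => f w + g w)).
Proof.
move=> hf hg; have := integrableD measurableT hf hg.
by apply: eq_integrable => // w _ /=.
Qed.

Lemma int_scale (c : R) (f : T -> R) : P.-integrable setT (EFin \o f) ->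
  P.-integrable setT (EFin \o (fun w => c * f w)).
Proof.
move=> hf; have := integrableZl measurableT c hf.
by apply: eq_integrable => // w _ /=.
Qed.

Lemma Rint_affine (c b : R) (f : T -> R) : P.-integrable setT (EFin \o f) ->
  \int[P]_w (c + b * f w) = c + b * \int[P]_w f w.
Proof.
move=> hf; rewrite RintegralD//; [|exact: int_cst|exact: int_scale].
by rewrite RintegralZl// Rint_cst.
Qed.

Lemma expRm1_le : expR (-1) <= (2^-1 : R).
Proof.
rewrite expRN lef_pV2 ?posrE ?expR_gt0//.
by rewrite (le_trans _ (expR_ge1Dx 1)).
Qed.

Lemma core (V Y W : T -> R) (k a A lam : R) :
  measurable_fun setT V -> measurable_fun setT Y -> measurable_fun setT W ->
  (forall w, 0 <= V w) -> (forall w, Y w ^+ 2 <= V w) ->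
  (forall w, 0 < W w) -> (forall w, W w <= 1) ->
  (forall w, expR (- A) * expR (- (a * V w)) <= W w) ->
  0 < k -> 0 <= a -> a * k ^+ 2 <= 1/2 -> 0 < lam ->
  (\int[P]_w (expR (V w / k ^+ 2))%:E <= 2%:E)%E ->
  [/\ P.-integrable setT (EFin \o Y), P.-integrable setT (EFin \o W),
      0 < \int[P]_w W w &
      \int[P]_w (W w * `|Y w|) <= \int[P]_w W w * ((A + 2 + lam ^+ 2 * k ^+ 2 / 4) / lam)].
Proof.
move=> mV mY mW V0 YV W0 W1 Wlb k0 a0 ak lam0 hE.
pose E := fun w => expR (V w / k ^+ 2).
have mE : measurable_fun setT E.
  by apply: measurableT_comp => //; apply: measurable_funM.
have [iE intE] := int_bound mE (fun w => expR_ge0 _) hE.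
have k2 : 0 < k ^+ 2 by rewrite exprn_gt0.
have VE w : V w <= k ^+ 2 * E w - k ^+ 2.
  have h := ler_wpM2l (ltW k2) (expR_ge1Dx (V w / k ^+ 2)).
  rewrite mulrDr mulr1 mulrCA divff ?gt_eqF// mulr1 in h.
  rewrite /E; lra.
have iV : P.-integrable setT (EFin \o V).
  apply: (int_dom mV (int_scale (k ^+ 2) iE)) => w.
  by rewrite ger0_norm// (le_trans (VE w))// lerBlDr lerDl ltW.
have intV : \int[P]_w V w <= k ^+ 2.
  apply: (le_trans (le_Rintegral measurableT iV _ (fun w _ => VE w))).
    by apply: int_add; [exact: int_scale|exact: int_cst].
  rewrite RintegralD//; [|exact: int_scale|exact: int_cst].
  rewrite RintegralZl// Rint_cst.
  have := ler_wpM2l (ltW k2) intE; lra.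
have iW : P.-integrable setT (EFin \o W).
  apply: (int_dom mW (int_cst 1)) => w /=.
  by rewrite ger0_norm ?W1 // ltW.
have Yb w : `|Y w| <= 1 + V w.
  have h := YV w; have h2 := sqr_ge0 (`|Y w| - 1).
  have e : `|Y w| ^+ 2 = Y w ^+ 2 by rewrite -normrX ger0_norm// sqr_ge0.
  nra.
have i1V : P.-integrable setT (EFin \o (fun w => 1 + V w)).
  by apply: int_add => //; exact: int_cst.
have iY : P.-integrable setT (EFin \o Y).
  by apply: (int_dom mY i1V).
have mWY : measurable_fun setT (fun w => W w * `|Y w|).
  by apply: measurable_funM => //; apply: measurableT_comp => //.
have iWY : P.-integrable setT (EFin \o (fun w => W w * `|Y w|)).
  apply: (int_dom mWY i1V) => w.
  rewrite normrM normr_id ger0_norm ?(ltW (W0 w))//.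
  apply: le_trans (Yb w); rewrite ler_piMl//; exact: W1.
have eA := expR_gt0 (- A).
have Zlb : expR (- A) / 2 <= \int[P]_w W w.
  have h w : expR (- A) + (- (expR (- A) * a)) * V w <= W w.
    apply: le_trans (Wlb w).
    have := ler_wpM2l (ltW eA) (expR_ge1Dx (- (a * V w))); lra.
  apply: le_trans (le_Rintegral measurableT _ iW (fun w _ => h w)); last first.
    by apply: int_add; [exact: int_cst|exact: int_scale].
  rewrite Rint_affine//.
  have ea0 : 0 <= expR (- A) * a by rewrite mulr_ge0// ltW.
  have h1 := ler_wpM2l ea0 intV.
  have h2 := ler_wpM2l (ltW eA) ak.
  lra.
have Zpos : 0 < \int[P]_w W w.
  by apply: lt_le_trans Zlb; rewrite divr_gt0.
split => //.
have key w : lam * (W w * `|Y w|) + (- (A + 1 + lam ^+ 2 * k ^+ 2 / 4)) * W w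
    <= expR (- (A + 1)) / 2 * E w.
  pose y := lam * `|Y w| - (1 + lam ^+ 2 * k ^+ 2 / 4) - (A + 1).
  have h1 : W w * (1 + y) <= expR y.
    have := W0 w; have := W1 w; have := expR_ge1Dx y; have := expR_gt0 y.
    case: (lerP 0 (1 + y)) => hy; nra.
  have h2 : y <= V w / k ^+ 2 + (-1) + (- (A + 1)).
    rewrite /y.
    suff : lam * `|Y w| <= V w / k ^+ 2 + lam ^+ 2 * k ^+ 2 / 4 by lra.
    pose t := `|Y w| / k.
    have ht : `|Y w| = t * k by rewrite /t divfK ?gt_eqF.
    have hV : t ^+ 2 <= V w / k ^+ 2.
      rewrite /t expr_div_n ler_pM2r ?invr_gt0// -normrX ger0_norm ?sqr_ge0//.
    rewrite ht; have := sqr_ge0 (t - lam * k / 2); nra.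
  have h3 : expR y <= E w * expR (-1) * expR (- (A + 1)).
    by rewrite -!expRD ler_expR.
  have h4 := ler_wpM2r (ltW (expR_gt0 (- (A + 1)))) (ler_wpM2l (expR_ge0 (V w / k ^+ 2)) expRm1_le).
  rewrite /E in h3 *; rewrite /y in h1; lra.
have h6 := le_Rintegral measurableT (int_add (int_scale lam iWY) (int_scale (- (A + 1 + lam ^+ 2 * k ^+ 2 / 4)) iW)) (int_scale (expR (- (A + 1)) / 2) iE) (fun w _ => key w).
rewrite RintegralD in h6; [|done|exact: int_scale|exact: int_scale].
rewrite !RintegralZl// in h6.
have eA1 : expR (- (A + 1)) <= expR (- A) / 2.
  by rewrite opprD expRD ler_pM2l//; exact: expRm1_le.
have h5 := ler_wpM2l (ltW (divr_gt0 (expR_gt0 (- (A + 1))) (ltr0n _ 2))) intE.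
rewrite mulrA ler_pdivlMr//.
lra.
Qed.

End core.

Section t.
Context {R : realType}.
Lemma deriv_g (C u Q s2 h : R) : s2 != 0 ->
  is_derive h 1 (fun h => C * expR (- ((h + u) ^+ 2 + Q) / (2 * s2)))
  (C * (expR (- ((h + u) ^+ 2 + Q) / (2 * s2)) * (- (h + u) / s2))).
Proof.
move=> s0; apply: is_derive_eq.
rewrite !scaler0 !addr0 !add0r !scaler1 -mulr2n /GRing.scale /=.
congr (_ * (_ * _)); field; exact: s0.
Qed.

Lemma sq_le (p q e : R) : (p - e * q) ^+ 2 <= 2 * p ^+ 2 + 2 * e ^+ 2 * q ^+ 2.
Proof. have := sqr_ge0 (p + e * q); nra. Qed.

Lemma arith1 (n2 v S e s2 : R) : 0 < s2 -> S <= 2 * n2 + 2 * e ^+ 2 * v ->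
  - (n2 / s2) + - (e ^+ 2 / s2 * v) <= - S / (2 * s2).
Proof.
move=> s0 h; have si : 0 <= s2^-1 by rewrite invr_ge0 ltW.
have := ler_wpM2r si h; rewrite invfM; lra.
Qed.

Lemma arith_ak (e k s2 eta : R) : 0 <= e * k -> e * k <= eta -> eta <= 1/16 ->
  3/4 <= s2 -> e ^+ 2 / s2 * k ^+ 2 <= 1/2.
Proof.
move=> ek0 ek eta1 s2lb.
have s20 : 0 < s2 by apply: lt_le_trans s2lb.
have ek2 : (e * k) ^+ 2 <= 1/256 by nra.
rewrite mulrAC ler_pdivrMr// -exprMn; lra.
Qed.

Lemma arith_eq (xi C Z s2 e M : R) : C != 0 -> Z != 0 -> s2 != 0 ->
  - xi - (C * Z)^-1 * ((- (C / s2) * xi) * Z + (C * e / s2) * M) =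
  ((1 - s2) * xi - e * (M / Z)) / s2.
Proof. by move=> C0 Z0 s0; field; rewrite s0 Z0 C0. Qed.

Lemma arith_final (xi nx e k s2 eta delta D M Z : R) :
  0 < e -> 0 < k -> 0 <= nx -> 0 < Z -> 3/4 <= s2 -> 1 <= D ->
  `|xi| <= nx ->
  `|M| <= Z * ((nx ^+ 2 / s2 + 2 + ((1 + nx) / k) ^+ 2 * k ^+ 2 / 4) / ((1 + nx) / k)) ->
  e <= eta -> e * k <= eta -> eta <= 1/16 -> eta = delta / (16 * D) ->
  `|(e ^+ 2 * xi - e * (M / Z)) / s2| <= delta / (2 * D) * (1 + nx).
Proof.
move=> e0 k0 nx0 Z0 s2lb D1 hxi hM ee ek eta1 etaE.
have s20 : 0 < s2 by apply: lt_le_trans s2lb.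
have D0 : 0 < D by apply: lt_le_trans D1.
set t := 1 + nx.
have t1 : 1 <= t by rewrite /t lerDl.
have t0 : 0 < t by apply: lt_le_trans t1.
set B := (_ / ((1 + nx) / k)) in hM.
have hB : B <= k * t * (43/12).
  have -> : B = k * (nx ^+ 2 / s2 + 2 + t ^+ 2 / 4) / t.
    rewrite /B /t; field.
    by rewrite -/t !gt_eqF.
  rewrite ler_pdivrMr//.
  have hA : nx ^+ 2 / s2 <= 4/3 * nx ^+ 2.
    rewrite ler_pdivrMr//; have := sqr_ge0 nx; nra.
  have h2 : nx ^+ 2 / s2 + 2 + t ^+ 2 / 4 <= 43/12 * t ^+ 2.
    have h3 : nx ^+ 2 <= t ^+ 2 by rewrite /t; nra.
    have h4 : 1 <= t ^+ 2 by nra.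
    lra.
  have := ler_wpM2l (ltW k0) h2; lra.
have hr : `|M / Z| <= B.
  by rewrite normrM normfV (gtr0_norm Z0) ler_pdivrMr// mulrC.
have h1 : `|e ^+ 2 * xi - e * (M / Z)| <= e ^+ 2 * nx + e * (k * t * (43/12)).
  apply: le_trans (ler_normB _ _) _.
  have hx1 : `|e ^+ 2 * xi| <= e ^+ 2 * nx.
    by rewrite normrM (ger0_norm (sqr_ge0 e)) ler_wpM2l// sqr_ge0.
  have hx2 : `|e * (M / Z)| <= e * (k * t * (43/12)).
    rewrite normrM (gtr0_norm e0); apply: ler_wpM2l; [exact: ltW|exact: le_trans hr hB].
  exact: lerD.
have e2 : e ^+ 2 <= eta by nra.
have h2 : e ^+ 2 * nx + e * (k * t * (43/12)) <= eta * t * (55/12).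
  have := ler_wpM2r nx0 e2; have := ler_wpM2r (ltW t0) ek; rewrite /t; nra.
rewrite normrM normfV (gtr0_norm s20) ler_pdivrMr//.
have -> : delta / (2 * D) = 8 * eta by rewrite etaE; field; rewrite gt_eqF.
have et0 : 0 <= eta * t by rewrite mulr_ge0// ltW// (lt_le_trans e0 ee).
have := ler_wpM2l et0 s2lb; lra.
Qed.

Lemma coord_le (n : nat) (v : 'I_n -> R) (i : 'I_n) :
  v i ^+ 2 <= \sum_(j < n) v j ^+ 2.
Proof. rewrite (bigD1 i) //= lerDl; apply: sumr_ge0 => j _; exact: sqr_ge0. Qed.

Lemma bound_g (C t Q s2 : R) : 0 <= C -> 0 < s2 -> 0 <= Q ->
  `|C * (expR (- (t ^+ 2 + Q) / (2 * s2)) * (- t / s2))| <= C * (1 + 2 * s2) / s2.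
Proof.
move=> C0 s0 Q0.
pose y := t ^+ 2 / (2 * s2).
have y0 : 0 <= y by rewrite /y divr_ge0 ?sqr_ge0// mulr_ge0// ltW.
pose E := expR (- (t ^+ 2 + Q) / (2 * s2)).
have E0 : 0 <= E by exact: expR_ge0.
have Ey : E <= expR (- y).
  rewrite /E /y ler_expR !mulNr lerN2 ler_pM2r ?invr_gt0 ?mulr_gt0//.
  by rewrite lerDl.
have Ey1 : E * (1 + y) <= 1.
  apply: le_trans (ler_wpM2r (addr_ge0 ler01 y0) Ey) _.
  rewrite -[leRHS](expRxMexpNx_1 y) mulrC ler_wpM2r ?expR_ge0//.
  by rewrite expR_ge1Dx.
have ty : `|t| <= (1 + 2 * s2) * (1 + y).
  have e1 : 2 * s2 * y = t ^+ 2 by rewrite /y mulrC divfK// mulf_neq0// gt_eqF.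
  have e2 : `|t| ^+ 2 = t ^+ 2 by rewrite -normrX ger0_norm// sqr_ge0.
  have := sqr_ge0 (`|t| - 1); have := normr_ge0 t; nra.
have Et : E * `|t| <= 1 + 2 * s2.
  have := ler_wpM2l E0 ty; have := ler_wpM2l (ltW (addr_gt0 ltr01 (mulr_gt0 (ltr0Sn _ 1) s0))) Ey1.
  nra.
rewrite -/E normrM ger0_norm// normrM ger0_norm// normrM normrN.
rewrite (@ger0_norm _ s2^-1) ?invr_ge0 ?(ltW s0)// -mulrA ler_wpM2l// mulrA ler_wpM2r// ?invr_ge0 ?ltW//.
Qed.
End t.

Theorem lemma12 (R : realType) (dT : measure_display) (T : measurableType dT)
  (P : probability T R) (d : nat) (X : 'I_d -> {RV P >-> R})
  (delta T1 : R) :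
  norm_subgaussian X ->
  0 < delta -> delta < 1 ->
  ln (16 / delta * d%:R * (psi2_norm X + 1)) <= T1 ->
  forall (x : 'rV[R]_d) (i : 'I_d),
    derivable (fun y => ln (OU_density X T1 y)) x (basis_vec i) /\
    `| - x ord0 i - derive (fun y => ln (OU_density X T1 y)) x (basis_vec i) |
      <= delta / (2 * d%:R) * (1 + enorm x).
Proof.
move=> hsub dpos dlt1 hT x i.
have d0 : (0 < d)%N := leq_ltn_trans (leq0n i) (ltn_ord i).
have D1 : 1 <= d%:R :> R by rewrite ler1n.
have hinf : has_inf (psi2_set X).
  by split => //; exists 0 => t [t0 _]; exact: ltW.
have psi0 : 0 <= psi2_norm X.
  by apply: lb_le_inf hsub _ => t [t0 _]; exact: ltW.
have [k [k0 hk] kpsi] := inf_adherent ltr01 hinf.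
rewrite -/(psi2_norm X) in kpsi.
set psi := psi2_norm X in psi0 kpsi hT.
set e := expR (- T1).
have e0 : 0 < e := expR_gt0 _.
have hK : e * (16 * d%:R * (psi + 1)) <= delta.
  have Kpos : 0 < 16 / delta * d%:R * (psi + 1).
    by rewrite !mulr_gt0 ?invr_gt0 ?(lt_le_trans ltr01 D1)// ?ltr_wpDl.
  move: hT; rewrite -ler_expR lnK ?posrE// => hK.
  have h1 := ler_wpM2l (ltW e0) hK.
  have eT : e * expR T1 = 1 by rewrite /e -expRD addNr expR0.
  rewrite eT in h1.
  have -> : e * (16 * d%:R * (psi + 1)) = e * (16 / delta * d%:R * (psi + 1)) * delta.
    by field; rewrite gt_eqF.
  by rewrite -[leRHS]mul1r ler_wpM2r// ltW.
have D16 : 0 < 16 * d%:R :> R by rewrite mulr_gt0// (lt_le_trans ltr01 D1).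
have e16D : 0 <= e * (16 * d%:R) by rewrite mulr_ge0 ?ltW.
have ek : e * k * (16 * d%:R) <= delta.
  have := ler_wpM2l e16D (ltW kpsi); lra.
have e16 : e * (16 * d%:R) <= delta.
  have p1 : 1 <= psi + 1 by lra.
  have := ler_wpM2l e16D p1; lra.
pose eta := delta / (16 * d%:R).
have ek' : e * k <= eta by rewrite /eta ler_pdivlMr.
have e' : e <= eta by rewrite /eta ler_pdivlMr.
have eta1 : eta <= 1/16.
  rewrite /eta ler_pdivrMr//; lra.
have eta0 : 0 < eta by rewrite /eta divr_gt0.
set s2 := 1 - expR (- (2 * T1)).
have es2 : s2 = 1 - e ^+ 2.
  by rewrite /s2 /e expr2 -expRD; congr (1 - expR _); lra.
have s2lb : 3/4 <= s2.
  rewrite es2; have := ltW e0; nra.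
have s20 : 0 < s2 by apply: lt_le_trans s2lb.
set C := (2 * pi * s2) `^ (- (d%:R / 2)).
have C0 : 0 < C by rewrite /C powR_gt0// !mulr_gt0// pi_gt0.
pose a (j : 'I_d) (h : R) := h * (i == j)%:R + x ord0 j.
pose f := fun (h : R) (w : T) =>
  gauss_density s2 ((h *: basis_vec i + x) - e *: rvec X w).
have fE0 h w : f h w = C * expR (- (\sum_(j < d) (a j h - e * X j w) ^+ 2) / (2 * s2)).
  rewrite /f /gauss_density /enorm sqr_sqrtr; last first.
    by apply: sumr_ge0 => j _; exact: sqr_ge0.
  suff -> : \sum_(j < d) ((h *: basis_vec i + x) - e *: rvec X w) ord0 j ^+ 2 =
    \sum_(j < d) (a j h - e * X j w) ^+ 2 by [].
  by apply: eq_bigr => j _; rewrite !mxE.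
pose u w := x ord0 i - e * X i w.
pose Q w := \sum_(j < d | j != i) (x ord0 j - e * X j w) ^+ 2.
have Q0 w : 0 <= Q w by apply: sumr_ge0 => j _; exact: sqr_ge0.
have sumE h w : \sum_(j < d) (a j h - e * X j w) ^+ 2 = (h + u w) ^+ 2 + Q w.
  rewrite (bigD1 i) //=; congr (_ ^+ 2 + _).
    by rewrite /a /u eqxx mulr1; ring.
  by apply: eq_bigr => j ji; rewrite /a eq_sym (negbTE ji) mulr0 add0r.
have fE h w : f h w = C * expR (- ((h + u w) ^+ 2 + Q w) / (2 * s2)).
  by rewrite fE0 sumE.
have mX j : measurable_fun setT (X j) by exact: measurable_funPT.
have msum (b : 'I_d -> R) : measurable_fun setT
    (fun w => \sum_(j < d) (b j - e * X j w) ^+ 2).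
  apply: measurable_sum => j; apply: measurable_funX; apply: measurable_funB => //.
  by apply: measurable_funM.
have mexp (b : 'I_d -> R) : measurable_fun setT
    (fun w => expR (- (\sum_(j < d) (b j - e * X j w) ^+ 2) / (2 * s2))).
  apply: measurableT_comp => //; apply: measurable_funM => //.
  by apply: measurableT_comp => //.
have mf h : measurable_fun setT (f h).
  have -> : f h = (fun w => C * expR (- (\sum_(j < d) (a j h - e * X j w) ^+ 2) / (2 * s2))).
    by apply/funext => w; exact: fE0.
  by apply: measurable_funM => //; exact: mexp.
have fb h w : `|f h w| <= C.
  rewrite fE normrM ger0_norm ?(ltW C0)// ger0_norm ?expR_ge0//.
  rewrite -[leRHS]mulr1 ler_wpM2l ?(ltW C0)// expR_le1 mulNr oppr_le0 divr_ge0//.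
    by rewrite addr_ge0// sqr_ge0.
  by rewrite mulr_ge0// ltW.
have intf h : P.-integrable setT (EFin \o f h) := int_dom (mf h) (int_cst P C) (fb h).
have df (h : R) (w : T) : is_derive h 1 (f ^~ w)
    (C * (expR (- ((h + u w) ^+ 2 + Q w) / (2 * s2)) * (- (h + u w) / s2))).
  have -> : f ^~ w = (fun h => C * expR (- ((h + u w) ^+ 2 + Q w) / (2 * s2))).
    by apply/funext => h'; exact: fE.
  by apply: deriv_g; rewrite gt_eqF.
have d1f h w : partial1of2 f h w =
    C * (expR (- ((h + u w) ^+ 2 + Q w) / (2 * s2)) * (- (h + u w) / s2)).
  by rewrite partial1of2E (@derive_val _ _ _ _ _ _ _ (df h w)).
have G_ub h w : `|partial1of2 f h w| <= C * (1 + 2 * s2) / s2.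
  by rewrite d1f; apply: bound_g => //; exact: ltW.
pose psi_ h := \int[P]_w f h w.
have Ia : `]-1, 1[%classic (0:R) by rewrite /= in_itv/= ltrN10 ltr01.
have G0 : forall w : T, 0 <= (fun _ => C * (1 + 2 * s2) / s2) w.
  move=> w /=; apply: divr_ge0; last exact: ltW.
  by apply: mulr_ge0; [exact: ltW|lra].
have dpsi : derivable psi_ 0 1.
  have := (@derivable_under_integral R _ T P f setT measurableT 0 (-1) 1 Ia (fun h _ => intf h)
    (fun h w _ _ => @ex_derive _ _ _ _ _ _ _ (df h w)) (fun _ => C * (1 + 2 * s2) / s2) G0 (int_cst P _) (fun h w _ _ => G_ub h w)).
  done.
have Dval : 'D_1 psi_ 0 = \int[P]_w partial1of2 f 0 w.
  rewrite -derive1E.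
  have := (@differentiation_under_integral R _ T P f setT measurableT 0 (-1) 1 Ia (fun h _ => intf h)
    (fun h w _ _ => @ex_derive _ _ _ _ _ _ _ (df h w)) (fun _ => C * (1 + 2 * s2) / s2) G0 (int_cst P _) (fun h w _ _ => G_ub h w)).
  exact.
have ipsi : is_derive (0:R) (1:R) psi_ (\int[P]_w partial1of2 f 0 w) := DeriveDef dpsi Dval.
pose W w := expR (- (\sum_(j < d) (a j 0 - e * X j w) ^+ 2) / (2 * s2)).
pose V w := \sum_(j < d) X j w ^+ 2.
have mW : measurable_fun setT W := mexp (fun j => a j 0).
have mV : measurable_fun setT V.
  by apply: measurable_sum => j; apply: measurable_funX.
have V0 w : 0 <= V w by apply: sumr_ge0 => j _; exact: sqr_ge0.
have YV w : X i w ^+ 2 <= V w.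
  rewrite /V (bigD1 i) //= lerDl; apply: sumr_ge0 => j _; exact: sqr_ge0.
have W0 w : 0 < W w := expR_gt0 _.
have W1 w : W w <= 1.
  rewrite /W expR_le1 mulNr oppr_le0 divr_ge0//.
    by apply: sumr_ge0 => j _; exact: sqr_ge0.
  by rewrite mulr_ge0// ltW.
pose nx := enorm x.
have nx0 : 0 <= nx by exact: sqrtr_ge0.
have nx2 : nx ^+ 2 = \sum_(j < d) x ord0 j ^+ 2.
  by rewrite /nx /enorm sqr_sqrtr//; apply: sumr_ge0 => j _; exact: sqr_ge0.
have Wlb w : expR (- (nx ^+ 2 / s2)) * expR (- (e ^+ 2 / s2 * V w)) <= W w.
  rewrite /W -expRD ler_expR.
  have hS : \sum_(j < d) (a j 0 - e * X j w) ^+ 2 <= 2 * nx ^+ 2 + 2 * e ^+ 2 * V w.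
    rewrite nx2 /V 2!mulr_sumr -big_split /=; apply: ler_sum => j _.
    rewrite /a mul0r add0r; exact: sq_le.
  exact: arith1.
have a0 : 0 <= e ^+ 2 / s2 by rewrite divr_ge0 ?sqr_ge0// ltW.
have ak : e ^+ 2 / s2 * k ^+ 2 <= 1/2.
  have ek0 : 0 <= e * k by rewrite mulr_ge0// ltW.
  exact: (arith_ak ek0 ek' eta1 s2lb).
have lam0 : 0 < (1 + nx) / k by rewrite divr_gt0// ltr_pwDl.
have hE : (\int[P]_w (expR (V w / k ^+ 2))%:E <= 2%:E)%E.
  apply: le_trans hk; rewrite le_eqVlt; apply/orP; left; apply/eqP.
  have hV w : enorm (rvec X w) ^+ 2 = V w.
    rewrite /enorm sqr_sqrtr; last by apply: sumr_ge0 => j _; exact: sqr_ge0.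
    by apply: eq_bigr => j _; rewrite mxE.
  by apply: eq_integral => w _; rewrite hV.
have [iY iW Zpos hM] := core mV (mX i) mW V0 YV W0 W1 Wlb k0 a0 ak lam0 hE.
pose Z := \int[P]_w W w.
pose M := \int[P]_w (W w * X i w).
have mWY : measurable_fun setT (fun w => W w * X i w) by exact: measurable_funM.
have iWY : P.-integrable setT (EFin \o (fun w => W w * X i w)).
  apply: (int_dom mWY (integrable_norm iY)) => w /=.
  by rewrite normrM (gtr0_norm (W0 w)) ler_piMl// W1.
have hMZ : `|M| <= Z * (((nx ^+ 2 / s2) + 2 + ((1 + nx) / k) ^+ 2 * k ^+ 2 / 4) / ((1 + nx) / k)).
  apply: le_trans (le_normr_Rintegral measurableT iWY) _.
  apply: le_trans hM; rewrite le_eqVlt; apply/orP; left; apply/eqP.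
  by apply: eq_Rintegral => w _; rewrite normrM (gtr0_norm (W0 w)).
have d1f0 w : partial1of2 f 0 w = (- (C / s2) * x ord0 i) * W w + (C * e / s2) * (W w * X i w).
  by rewrite d1f -sumE -/(W w) /u; field; rewrite gt_eqF.
have Dint : \int[P]_w partial1of2 f 0 w = (- (C / s2) * x ord0 i) * Z + (C * e / s2) * M.
  under eq_Rintegral do rewrite d1f0.
  rewrite RintegralD//; [|exact: int_scale|exact: int_scale].
  by rewrite !RintegralZl.
have f0 w : f 0 w = C * W w := fE0 0 w.
have psi00 : psi_ 0 = C * Z.
  by rewrite /psi_; under eq_Rintegral do rewrite f0; rewrite RintegralZl.
have psi0pos : 0 < psi_ 0 by rewrite psi00 mulr_gt0.
have ilog : is_derive (0:R) (1:R) (@ln R \o psi_) ((psi_ 0)^-1 * \int[P]_w partial1of2 f 0 w).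
  exact: (is_derive1_comp (is_derive1_ln psi0pos) ipsi).
have psiE h : psi_ h = OU_density X T1 (h *: basis_vec i + x) by [].
have qeq : (fun h : R => h^-1 *: (((fun y => ln (OU_density X T1 y)) \o shift x) (h *: basis_vec i)
     - (fun y => ln (OU_density X T1 y)) x)) =
   (fun h : R => h^-1 *: (((@ln R \o psi_) \o shift 0) (h *: 1) - (@ln R \o psi_) 0)).
  apply/funext => h /=; rewrite !psiE scale0r add0r addr0.
  by rewrite -[h%:A]/(h * 1) mulr1.
split.
  by rewrite /derivable qeq; exact: (@ex_derive _ _ _ _ _ _ _ ilog).
rewrite /derive qeq.
have := @derive_val _ _ _ _ _ _ _ ilog; rewrite /derive => ->.
rewrite psi00 Dint.
rewrite (@arith_eq _ (x ord0 i) C Z s2 e M (lt0r_neq0 C0) (lt0r_neq0 Zpos) (lt0r_neq0 s20)).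
have -> : 1 - s2 = e ^+ 2 by rewrite es2 opprB addrCA subrr addr0.
have hxi : `|x ord0 i| <= nx.
  rewrite /nx /enorm -sqrtr_sqr ler_sqrt; last by apply: sumr_ge0 => j _; exact: sqr_ge0.
  exact: (coord_le (fun j => x ord0 j) i).
exact: (arith_final e0 k0 nx0 Zpos s2lb D1 hxi hMZ e' ek' eta1 erefl).
Qed.
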